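(* Fix $N>0$ (packet size in bits), $\epsilon\in(0,1)$ (block error probability) and a minimum blocklength $\hat m>0$. For $m>0$ and $\gamma>0$ let $$F(m,\gamma)=\sqrt{\frac{1}{m}\left(1-\frac{1}{(\gamma+1)^2}\right)}\,\frac{Q^{-1}(\epsilon)}{\ln 2}-\log_2(1+\gamma)+\frac{N}{m},$$ and let $\Gamma(m)$ denote the implicit function defined by $F(m,\Gamma(m))=0$, $\Gamma(m)>0$. If $$\frac{Q^{-1}(\epsilon)}{\sqrt{N}}\le \frac{2\sqrt{\ln 2}}{4-\sqrt{2}}=0.64394\ldots,$$ then the function $m\mapsto m\,\Gamma(m)$ is strictly decreasing on $\{m: m\ge \hat m\}$.
   Context: $Q^{-1}(\cdot)$ is the inverse of the Gaussian Q-function $Q(t)=\frac{1}{\sqrt{2\pi}}\int_t^\infty e^{-u^2/2}\,du$. The equation $F(m,\gamma)=0$ is the finite-blocklength achievable-rate relation $\frac{N}{m}=\log_2(1+\gamma)-\sqrt{\frac1m\big(1-\frac{1}{(1+\gamma)^2}\big)}\frac{Q^{-1}(\epsilon)}{\ln 2}$ for blocklength $m$ and SINR $\gamma$; $\Gamma(m)$ is the SINR required to send $N$ bits in $m$ channel uses with error probability $\epsilon$, and $m\Gamma(m)$ is (proportional to) the corresponding energy. *)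

(* Defs.v *)
From Stdlib Require Import Reals.
From Coquelicot Require Import Coquelicot.
Open Scope R_scope.

Definition Qfun (t : R) : R :=
  / sqrt (2 * PI) *
  RInt_gen (fun u => exp (- (u ^ 2) / 2)) (at_point t) (Rbar_locally p_infty).

Definition log2 (x : R) : R := ln x / ln 2.

(* F(m, gamma) for packet size N and q = Q^{-1}(eps). *)
Definition Ffun (N q m g : R) : R :=
  sqrt (/ m * (1 - / ((g + 1) ^ 2))) * q / ln 2 - log2 (1 + g) + N / m.

(* Main.v *)
From Stdlib Require Import Reals Lra Psatz.
From Coquelicot Require Import Coquelicot.
Require Import Defs.
Open Scope R_scope.

Lemma deriv_neg_left f w l x : derivable_pt_lim f w l -> l < 0 -> x < w ->
  exists t, x < t < w /\ f w < f t.
Proof.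
  intros Hd Hl Hx.
  destruct (Hd (- l / 2) ltac:(lra)) as [d Hdl].
  set (h := - Rmin (d / 2) ((w - x) / 2)).
  assert (Hd0 := cond_pos d).
  assert (Hm1 : Rmin (d / 2) ((w - x) / 2) <= d / 2) by apply Rmin_l.
  assert (Hm2 : Rmin (d / 2) ((w - x) / 2) <= (w - x) / 2) by apply Rmin_r.
  assert (Hm3 : 0 < Rmin (d / 2) ((w - x) / 2)) by (apply Rmin_glb_lt; lra).
  assert (Hh : h <> 0) by (unfold h; lra).
  assert (Hh2 : Rabs h < d) by (unfold h; rewrite Rabs_Ropp, Rabs_right; lra).
  specialize (Hdl h Hh Hh2).
  exists (w + h). split; [unfold h; lra|].
  apply Rabs_def2 in Hdl. destruct Hdl as [H1 H2].
  assert (Hq : (f (w + h) - f w) / h < 0) by lra.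
  assert (hneg : h < 0) by (unfold h; lra).
  destruct (Rle_or_lt (f (w + h)) (f w)) as [Hc|Hc]; [|lra].
  exfalso.
  assert (0 <= (f (w + h) - f w) / h).
  { unfold Rdiv. replace ((f (w + h) - f w) * / h) with ((f w - f (w + h)) * / (- h)) by (field; lra).
    apply Rmult_le_pos; [lra|]. apply Rlt_le, Rinv_0_lt_compat; lra. }
  lra.
Qed.

Lemma deriv_pos_right f w l y : derivable_pt_lim f w l -> 0 < l -> w < y ->
  exists t, w < t < y /\ f w < f t.
Proof.
  intros Hd Hl Hx.
  destruct (Hd (l / 2) ltac:(lra)) as [d Hdl].
  set (h := Rmin (d / 2) ((y - w) / 2)).
  assert (Hd0 := cond_pos d).
  assert (Hm1 : Rmin (d / 2) ((y - w) / 2) <= d / 2) by apply Rmin_l.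
  assert (Hm2 : Rmin (d / 2) ((y - w) / 2) <= (y - w) / 2) by apply Rmin_r.
  assert (Hm3 : 0 < Rmin (d / 2) ((y - w) / 2)) by (apply Rmin_glb_lt; lra).
  assert (Hh : h <> 0) by (unfold h; lra).
  assert (Hh2 : Rabs h < d) by (unfold h; rewrite Rabs_right; lra).
  specialize (Hdl h Hh Hh2).
  exists (w + h). split; [unfold h; lra|].
  apply Rabs_def2 in Hdl. destruct Hdl as [H1 H2].
  assert (Hq : 0 < (f (w + h) - f w) / h) by lra.
  assert (hpos : 0 < h) by (unfold h; lra).
  destruct (Rle_or_lt (f (w + h)) (f w)) as [Hc|Hc]; [|lra].
  exfalso.
  assert ((f (w + h) - f w) / h <= 0).
  { unfold Rdiv. rewrite <- (Rmult_0_l (/ h)). apply Rmult_le_compat_r; [|lra].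
    apply Rlt_le, Rinv_0_lt_compat; lra. }
  lra.
Qed.

Lemma cross_dec (f f' : R -> R) x y : 0 < x -> x < y ->
  (forall z, 0 < z -> derivable_pt_lim f z (f' z)) ->
  (forall z, 0 < z -> 0 <= f z -> f' z < 0) -> 0 <= f y -> f y < f x.
Proof.
  intros Hx Hxy Hd Hs Hy.
  destruct (Rlt_or_le (f y) (f x)) as [H|H]; [exact H|exfalso].
  destruct (continuity_ab_maj f x y ltac:(lra)) as [z [Hz1 Hz2]].
  { intros c Hc. apply derivable_continuous_pt. exists (f' c). apply Hd. lra. }
  assert (Hw : exists w, x < w <= y /\ forall c, x <= c <= y -> f c <= f w).
  { destruct (Rlt_or_le x z) as [Hxz|Hxz].
    - exists z. split; [lra|exact Hz1].
    - exists y. split; [lra|]. intros c Hc.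
      assert (z = x) by lra. subst z.
      specialize (Hz1 c Hc). lra. }
  destruct Hw as [w [Hw1 Hw2]].
  assert (0 <= f w) by (specialize (Hw2 y ltac:(lra)); lra).
  destruct (deriv_neg_left f w (f' w) x (Hd w ltac:(lra)) (Hs w ltac:(lra) H0) ltac:(lra))
    as [t [Ht1 Ht2]].
  specialize (Hw2 t ltac:(lra)). lra.
Qed.

Lemma cross_inc (f f' : R -> R) x y : 0 < x -> x < y ->
  (forall z, 0 < z -> derivable_pt_lim f z (f' z)) ->
  (forall z, 0 < z -> 0 <= f z -> 0 < f' z) -> 0 <= f x -> f x < f y.
Proof.
  intros Hx Hxy Hd Hs Hy.
  destruct (Rlt_or_le (f x) (f y)) as [H|H]; [exact H|exfalso].
  destruct (continuity_ab_maj f x y ltac:(lra)) as [z [Hz1 Hz2]].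
  { intros c Hc. apply derivable_continuous_pt. exists (f' c). apply Hd. lra. }
  assert (Hw : exists w, x <= w < y /\ forall c, x <= c <= y -> f c <= f w).
  { destruct (Rlt_or_le z y) as [Hxz|Hxz].
    - exists z. split; [lra|exact Hz1].
    - exists x. split; [lra|]. intros c Hc.
      assert (z = y) by lra. subst z.
      specialize (Hz1 c Hc). lra. }
  destruct Hw as [w [Hw1 Hw2]].
  assert (0 <= f w) by (specialize (Hw2 x ltac:(lra)); lra).
  destruct (deriv_pos_right f w (f' w) y (Hd w ltac:(lra)) (Hs w ltac:(lra) H0) ltac:(lra))
    as [t [Ht1 Ht2]].
  specialize (Hw2 t ltac:(lra)). lra.
Qed.

Lemma ln_lb x : 0 <= x -> 2 * x / (2 + x) <= ln (1 + x).
Proof.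
  intros Hx. destruct (Req_dec x 0) as [->|Hx0].
  { replace (1 + 0) with 1 by lra. rewrite ln_1. lra. }
  set (f := fun t => ln (1 + t) - 2 * t / (2 + t)).
  destruct (MVT_cor2 f (fun t => / (1 + t) - 4 / (2 + t) ^ 2) 0 x ltac:(lra)) as [c [Hc1 Hc2]].
  { intros c Hc. apply is_derive_Reals. unfold f. auto_derive.
    - split; [lra|]. split; [|auto]. lra.
    - field. lra. }
  unfold f in Hc1. replace (1 + 0) with 1 in Hc1 by lra. rewrite ln_1 in Hc1.
  assert (0 <= / (1 + c) - 4 / (2 + c) ^ 2).
  { replace (/ (1 + c) - 4 / (2 + c) ^ 2) with (c ^ 2 / ((1 + c) * (2 + c) ^ 2)) by (field; lra).
    apply Rmult_le_pos; [nra|]. apply Rlt_le, Rinv_0_lt_compat. apply Rmult_lt_0_compat; nra. }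
  assert (0 <= (/ (1 + c) - 4 / (2 + c) ^ 2) * (x - 0)) by (apply Rmult_le_pos; lra).
  replace (2 * 0 / (2 + 0)) with 0 in Hc1 by field. lra.
Qed.

Lemma ln_ub x : 0 <= x -> ln (1 + x) <= x * (6 + x) / (6 + 4 * x).
Proof.
  intros Hx. destruct (Req_dec x 0) as [->|Hx0].
  { replace (1 + 0) with 1 by lra. rewrite ln_1. lra. }
  set (f := fun t => t * (6 + t) / (6 + 4 * t) - ln (1 + t)).
  destruct (MVT_cor2 f (fun t => (36 + 12 * t + 4 * t ^ 2) / (6 + 4 * t) ^ 2 - / (1 + t)) 0 x ltac:(lra)) as [c [Hc1 Hc2]].
  { intros c Hc. apply is_derive_Reals. unfold f. auto_derive.
    - split; [lra|]. split; [|auto]. lra.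
    - field. lra. }
  unfold f in Hc1. replace (1 + 0) with 1 in Hc1 by lra. rewrite ln_1 in Hc1.
  assert (0 <= (36 + 12 * c + 4 * c ^ 2) / (6 + 4 * c) ^ 2 - / (1 + c)).
  { replace ((36 + 12 * c + 4 * c ^ 2) / (6 + 4 * c) ^ 2 - / (1 + c)) with (4 * c ^ 3 / ((1 + c) * (6 + 4 * c) ^ 2)) by (field; lra).
    apply Rmult_le_pos; [nra|]. apply Rlt_le, Rinv_0_lt_compat. apply Rmult_lt_0_compat; nra. }
  assert (0 <= ((36 + 12 * c + 4 * c ^ 2) / (6 + 4 * c) ^ 2 - / (1 + c)) * (x - 0)) by (apply Rmult_le_pos; lra).
  replace (0 * (6 + 0) / (6 + 4 * 0)) with 0 in Hc1 by field. lra.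
Qed.

Lemma ln_ge2 x : 8 <= x -> 2 <= ln (1 + x).
Proof.
  intros Hx. rewrite <- (ln_exp 2). apply ln_le. apply exp_pos.
  replace 2 with (1 + 1) by lra. rewrite exp_plus.
  pose proof exp_le_3. pose proof (exp_pos 1). nra.
Qed.

Definition rho (s g : R) := ln (1 + g) / g - s * sqrt (g + 2) / (1 + g).
Definition drho (s g : R) := - (ln (1 + g) - g / (1 + g)) / g ^ 2
   + s * (g + 3) / (2 * sqrt (g + 2) * (1 + g) ^ 2).

Lemma rho_deriv s g : 0 < g -> derivable_pt_lim (rho s) g (drho s g).
Proof.
  intros Hg. apply is_derive_Reals. unfold rho, drho.
  assert (Hw : 0 < sqrt (g + 2)) by (apply sqrt_lt_R0; lra).
  assert (Hww : sqrt (g + 2) * sqrt (g + 2) = g + 2) by (apply sqrt_sqrt; lra).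
  auto_derive.
  - repeat split; lra.
  - idtac.
    replace (g + 3) with (2 * sqrt (g + 2) * sqrt (g + 2) - (1 + g)) by lra.
    field. repeat split; lra.
Qed.

Lemma K1 g w : 0 < g -> 0 < w -> w * w = g + 2 ->
  (6 + g) / (6 + 4 * g) < 36143 / 100000 + 93 / 200 * w / (1 + g).
Proof.
  intros Hg Hw Hww.
  assert (H: (6 + g) * (1 + g) < (36143 / 100000 * (1 + g) + 93 / 200 * w) * (6 + 4 * g)).
  { assert (Hsq : (383142/100000 - 44572/100000 * g) * (1 + g) < 93/200 * w * (6 + 4 * g)).
    { destruct (Rle_or_lt ((383142/100000 - 44572/100000 * g)) 0) as [Hn|Hp].
      - assert (0 < 93/200 * w * (6 + 4 * g)) by (apply Rmult_lt_0_compat; lra). nra.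
      - apply Rsqr_incrst_0; unfold Rsqr; [| nra | apply Rmult_le_pos; [apply Rmult_le_pos|]; lra].
        replace (93 / 200 * w * (6 + 4 * g) * (93 / 200 * w * (6 + 4 * g)))
          with ((93/200)^2 * (w * w) * (6 + 4 * g) ^ 2) by ring.
        rewrite Hww. nra. }
    nra. }
  apply (Rmult_lt_reg_r ((6 + 4 * g) * (1 + g))); [nra|].
  field_simplify; try lra.

Qed.

Lemma K2 g w : 0 < g -> g <= 8 -> 0 < w -> w * w = g + 2 ->
  93 / 200 * (g + 3) * (g + 2) < 2 * w * (1 + g).
Proof.
  intros Hg Hg8 Hw Hww.
  apply Rsqr_incrst_0; unfold Rsqr; [| nra | nra].
  replace (2 * w * (1 + g) * (2 * w * (1 + g))) with (4 * (w * w) * (1 + g) ^ 2) by ring.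
  rewrite Hww.
  assert (0 < (g + 2)) by lra.
  replace (93 / 200 * (g + 3) * (g + 2) * (93 / 200 * (g + 3) * (g + 2)))
    with ((g + 2) * ((93/200)^2 * (g+3)^2 * (g + 2))) by ring.
  replace (4 * (g + 2) * (1 + g) ^ 2) with ((g + 2) * (4 * (1 + g) ^ 2)) by ring.
  apply Rmult_lt_compat_l; [lra|].
  nra.
Qed.

Definition Acst := (4 - sqrt 2) ^ 2 / 4.

Lemma Acst_lb : 36143 / 100000 <= Acst * (93 / 200) ^ 2.
Proof.
  unfold Acst. pose proof (sqrt_sqrt 2 ltac:(lra)). pose proof (sqrt_lt_R0 2 ltac:(lra)).
  set (r := sqrt 2) in *.
  assert (r < 141422 / 100000) by nra.
  replace ((4 - r) ^ 2 / 4) with ((18 - 8 * r) / 4) by (field_simplify; nra).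
  lra.
Qed.

Lemma pointwise s g : 0 < g -> 0 <= rho s g - Acst * s ^ 2 -> drho s g < 0.
Proof.
  intros Hg Hh. unfold rho, drho in *.
  pose proof (ln_lb g ltac:(lra)) as Hlb. pose proof (ln_ub g ltac:(lra)) as Hub.
  assert (Hw : 0 < sqrt (g + 2)) by (apply sqrt_lt_R0; lra).
  assert (Hww : sqrt (g + 2) * sqrt (g + 2) = g + 2) by (apply sqrt_sqrt; lra).
  pose proof Acst_lb as HA.
  assert (HA0 : 0 < Acst) by nra.
  set (w := sqrt (g + 2)) in *. set (l := ln (1 + g)) in *.
  assert (Hh' : Acst * s ^ 2 * (g * (1 + g)) <= l * (1 + g) - s * w * g).
  { replace (l * (1 + g) - s * w * g) with ((l / g - s * w / (1 + g)) * (g * (1 + g))) by (field; lra).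
    apply Rmult_le_compat_r; nra. }
  assert (Hlb' : g * g <= (2 + g) * ((1 + g) * l - g)).
  { apply (Rmult_le_compat_r (2 + g)) in Hlb; [|lra].
    replace (2 * g / (2 + g) * (2 + g)) with (2 * g) in Hlb by (field; lra). nra. }
  assert (Hub' : l * (6 + 4 * g) <= g * (6 + g)).
  { apply (Rmult_le_compat_r (6 + 4 * g)) in Hub; [|lra].
    replace (g * (6 + g) / (6 + 4 * g) * (6 + 4 * g)) with (g * (6 + g)) in Hub by (field; lra). lra. }
  assert (Key : s * (g + 3) * g ^ 2 < 2 * w * (1 + g) * ((1 + g) * l - g)).
  { destruct (Rle_or_lt s 0) as [Hs|Hs].
    - assert (0 < (1 + g) * l - g) by nra.
      assert (0 < 2 * w * (1 + g) * ((1 + g) * l - g)) by (repeat apply Rmult_lt_0_compat; lra).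
      assert (s * (g + 3) * g ^ 2 <= 0).
      { replace (s * (g + 3) * g ^ 2) with (- ((- s) * (g + 3) * g ^ 2)) by ring.
        assert (0 <= (- s) * (g + 3) * g ^ 2) by (repeat apply Rmult_le_pos; nra). lra. }
      lra.
    - destruct (Rle_or_lt (93 / 200) s) as [Hs0|Hs0].
      + exfalso.
        pose proof (K1 g w Hg Hw Hww) as HK.
        assert (HAs : Acst * (93 / 200) ^ 2 <= Acst * s ^ 2) by (apply Rmult_le_compat_l; nra).
        assert (Hc : (36143 / 100000 * (1 + g) + 93 / 200 * w) * g <= l * (1 + g)).
        { assert (93 / 200 * w * g <= s * w * g) by (apply Rmult_le_compat_r; [lra|]; apply Rmult_le_compat_r; lra).
          assert (36143 / 100000 * (g * (1 + g)) <= Acst * s ^ 2 * (g * (1 + g))) by (apply Rmult_le_compat_r; nra).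
          nra. }
        apply (Rmult_lt_compat_r ((6 + 4 * g) * (1 + g))) in HK; [|nra].
        replace ((6 + g) / (6 + 4 * g) * ((6 + 4 * g) * (1 + g))) with ((6 + g) * (1 + g)) in HK by (field; lra).
        replace ((36143 / 100000 + 93 / 200 * w / (1 + g)) * ((6 + 4 * g) * (1 + g)))
          with ((36143 / 100000 * (1 + g) + 93 / 200 * w) * (6 + 4 * g)) in HK by (field; lra).
        (* combine: l(1+g)(6+4g) <= g(6+g)(1+g) < g*(...)(6+4g) <= l(1+g)(6+4g) *)
        assert (l * (1 + g) * (6 + 4 * g) <= g * (6 + g) * (1 + g)) by nra.
        assert ((36143 / 100000 * (1 + g) + 93 / 200 * w) * g * (6 + 4 * g) <= l * (1 + g) * (6 + 4 * g)) by (apply Rmult_le_compat_r; lra).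
        nra.
      + destruct (Rle_or_lt g 8) as [Hg8|Hg8].
        * pose proof (K2 g w Hg Hg8 Hw Hww) as HK.
          assert (s * (g + 3) * g ^ 2 < 93 / 200 * (g + 3) * g ^ 2) by (apply Rmult_lt_compat_r; [nra|]; apply Rmult_lt_compat_r; lra).
          assert (93 / 200 * (g + 3) * g ^ 2 * (2 + g) < 2 * w * (1 + g) * g ^ 2).
          { replace (93 / 200 * (g + 3) * g ^ 2 * (2 + g)) with (93 / 200 * (g + 3) * (g + 2) * g ^ 2) by ring.
            apply Rmult_lt_compat_r; nra. }
          assert (2 * w * (1 + g) * (g * g) <= 2 * w * (1 + g) * ((2 + g) * ((1 + g) * l - g))).
          { apply Rmult_le_compat_l; [nra|exact Hlb']. }
          nra.
        * pose proof (ln_ge2 g ltac:(lra)) as H2. fold l in H2.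
          assert (Hsw : s * w * g <= l * (1 + g)).
          { assert (0 <= Acst * s ^ 2 * (g * (1 + g))) by (apply Rmult_le_pos; nra). lra. }
          apply (Rmult_lt_reg_r w); [lra|].
          assert (E1 : s * (g + 3) * g ^ 2 * w = (s * w * g) * ((g + 3) * g)) by ring.
          assert (E2 : 2 * w * (1 + g) * ((1 + g) * l - g) * w = 2 * (g + 2) * (1 + g) * ((1 + g) * l - g)).
          { replace (2 * w * (1 + g) * ((1 + g) * l - g) * w) with (2 * (w * w) * (1 + g) * ((1 + g) * l - g)) by ring.
            rewrite Hww. ring. }
          rewrite E1, E2.
          assert ((s * w * g) * ((g + 3) * g) <= l * (1 + g) * ((g + 3) * g)) by (apply Rmult_le_compat_r; nra).
          assert (2 * g * (g + 2) < l * (g * g + 3 * g + 4)).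
          { assert (0 <= (l - 2) * (g * g + 3 * g + 4)) by (apply Rmult_le_pos; [lra| assert (0 <= g * g) by (apply Rmult_le_pos; lra); lra]). lra. }
          nra. }
  assert (Hpos : 0 < 2 * w * (1 + g) ^ 2 * g ^ 2) by (repeat apply Rmult_lt_0_compat; nra).
  apply (Rmult_lt_reg_r (2 * w * (1 + g) ^ 2 * g ^ 2)); [exact Hpos|].
  rewrite Rmult_0_l.
  replace ((- (l - g / (1 + g)) / g ^ 2 + s * (g + 3) / (2 * w * (1 + g) ^ 2)) * (2 * w * (1 + g) ^ 2 * g ^ 2))
    with (s * (g + 3) * g ^ 2 - 2 * w * (1 + g) * ((1 + g) * l - g)) by (field; lra).
  lra.
Qed.
Definition Sf (g : R) := sqrt (1 - / ((g + 1) ^ 2)).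

Lemma eq_form N q m g : 0 < m -> 0 < g -> Ffun N q m g = 0 ->
  m * ln (1 + g) - q * sqrt m * Sf g = N * ln 2.
Proof.
  intros Hm Hg H. unfold Ffun, log2 in H.
  rewrite sqrt_mult_alt in H by (left; apply Rinv_0_lt_compat; lra).
  rewrite sqrt_inv in H. fold (Sf g) in H.
  assert (Hl2 : 0 < ln 2) by (rewrite <- ln_1; apply ln_increasing; lra).
  assert (Ht : 0 < sqrt m) by (apply sqrt_lt_R0; lra).
  assert (Htt : sqrt m * sqrt m = m) by (apply sqrt_sqrt; lra).
  set (t := sqrt m) in *. set (S := Sf g) in *. clearbody t S. subst m.
  match type of H with ?E = 0 =>
    replace (t * t * ln (1 + g) - q * t * S) with (N * ln 2 - E * (t * t * ln 2)) by (field; lra) end.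
  rewrite H. ring.
Qed.

Lemma Sf_sq g : 0 < g -> Sf g * Sf g = 1 - / ((g + 1) ^ 2).
Proof.
  intros Hg. unfold Sf. apply sqrt_sqrt.
  assert (/ ((g + 1) ^ 2) <= 1); [|lra].
  rewrite <- Rinv_1. apply Rinv_le_contravar; [lra|nra].
Qed.

Lemma Sf_pos g : 0 < g -> 0 < Sf g.
Proof.
  intros Hg. unfold Sf. apply sqrt_lt_R0.
  assert (/ ((g + 1) ^ 2) < 1); [|lra].
  rewrite <- Rinv_1. apply Rinv_lt_contravar; nra.
Qed.

Lemma Sf_mono g1 g2 : 0 < g1 -> g1 <= g2 -> Sf g1 <= Sf g2.
Proof.
  intros Hg H. unfold Sf. apply sqrt_le_1_alt.
  assert (/ ((g2 + 1) ^ 2) <= / ((g1 + 1) ^ 2)); [|lra].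
  apply Rinv_le_contravar; nra.
Qed.

Lemma Sf_alt g : 0 < g -> Sf g = sqrt g * (sqrt (g + 2) / (1 + g)).
Proof.
  intros Hg.
  assert (H1 : 0 <= sqrt g * (sqrt (g + 2) / (1 + g))).
  { apply Rmult_le_pos; [apply sqrt_pos|]. apply Rmult_le_pos; [apply sqrt_pos|].
    apply Rlt_le, Rinv_0_lt_compat; lra. }
  assert (H2 : Sf g * Sf g = (sqrt g * (sqrt (g + 2) / (1 + g))) * (sqrt g * (sqrt (g + 2) / (1 + g)))).
  { rewrite Sf_sq by lra.
    replace ((sqrt g * (sqrt (g + 2) / (1 + g))) * (sqrt g * (sqrt (g + 2) / (1 + g))))
      with ((sqrt g * sqrt g) * (sqrt (g + 2) * sqrt (g + 2)) / (1 + g) ^ 2) by (field; lra).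
    rewrite !sqrt_sqrt by lra. field. lra. }
  pose proof (Sf_pos g Hg). nra.
Qed.

Lemma h_deriv a K g : 0 < g ->
  derivable_pt_lim (fun z => ln (1 + z) - a * Sf z - K) g
    (/ (1 + g) - a * (/ ((g + 1) ^ 3) / Sf g)).
Proof.
  intros Hg. apply is_derive_Reals. unfold Sf.
  pose proof (Sf_pos g Hg) as HS. pose proof (Sf_sq g Hg) as HS2. unfold Sf in HS, HS2.
  assert (0 < 1 - / ((g + 1) ^ 2)).
  { assert (/ ((g + 1) ^ 2) < 1); [|lra].
    rewrite <- Rinv_1. apply Rinv_lt_contravar; nra. }
  auto_derive.
  all: replace ((g + 1) * ((g + 1) * 1)) with ((g + 1) ^ 2) by ring;
       replace (1 + - / (g + 1) ^ 2) with (1 - / (g + 1) ^ 2) by ring.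
  - repeat split; try lra. apply pow_nonzero. lra.
  - field. split; lra.
Qed.

Lemma stepA N q m1 m2 g1 g2 : 0 < N -> 0 < m1 -> m1 < m2 -> 0 < g1 -> 0 < g2 ->
  m1 * ln (1 + g1) - q * sqrt m1 * Sf g1 = N * ln 2 ->
  m2 * ln (1 + g2) - q * sqrt m2 * Sf g2 = N * ln 2 -> g2 < g1.
Proof.
  intros HN Hm1 H12 Hg1 Hg2 E1 E2.
  assert (Hl2 : 0 < ln 2) by (rewrite <- ln_1; apply ln_increasing; lra).
  assert (Hc : 0 < N * ln 2) by nra.
  set (c := N * ln 2) in *. clearbody c.
  assert (Ht1 : 0 < sqrt m1) by (apply sqrt_lt_R0; lra).
  assert (Ht2 : 0 < sqrt m2) by (apply sqrt_lt_R0; lra).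
  assert (Ht12 : sqrt m1 < sqrt m2) by (apply sqrt_lt_1; lra).
  assert (Htt1 : sqrt m1 * sqrt m1 = m1) by (apply sqrt_sqrt; lra).
  assert (Htt2 : sqrt m2 * sqrt m2 = m2) by (apply sqrt_sqrt; lra).
  pose proof (Sf_pos g1 Hg1) as HS1. pose proof (Sf_pos g2 Hg2) as HS2.
  assert (Hl1 : 0 < ln (1 + g1)) by (rewrite <- ln_1; apply ln_increasing; lra).
  destruct (Rlt_or_le g2 g1) as [H|H]; [exact H|exfalso].
  destruct (Rle_or_lt q 0) as [Hq|Hq].
  - assert (ln (1 + g1) <= ln (1 + g2)) by (apply ln_le; lra).
    pose proof (Sf_mono g1 g2 Hg1 H).
    assert (m1 * ln (1 + g1) < m2 * ln (1 + g2)) by nra.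
    assert (sqrt m1 * Sf g1 <= sqrt m2 * Sf g2) by nra.
    assert (- q * (sqrt m1 * Sf g1) <= - q * (sqrt m2 * Sf g2)) by (apply Rmult_le_compat_l; lra).
    nra.
  - set (t1 := sqrt m1) in *. set (t2 := sqrt m2) in *. clearbody t1 t2. subst m1 m2.
    set (a := q / t2).
    set (h := fun z => ln (1 + z) - a * Sf z - c / (t2 * t2)).
    assert (Hh2 : h g2 = 0).
    { unfold h, a. 
      replace (ln (1 + g2)) with ((c + q * t2 * Sf g2) / (t2 * t2)) by (field_simplify_eq; [lra|nra]).
      field. lra. }
    assert (Hh1 : 0 < h g1).
    { unfold h, a.
      replace (ln (1 + g1)) with ((c + q * t1 * Sf g1) / (t1 * t1)) by (field_simplify_eq; [lra|nra]).
      replace ((c + q * t1 * Sf g1) / (t1 * t1) - q / t2 * Sf g1 - c / (t2 * t2))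
        with ((q * Sf g1 * t1 * t2 * (t2 - t1) + c * (t2 * t2 - t1 * t1)) / (t1 * t1 * (t2 * t2))) by (field; lra).
      apply Rdiv_lt_0_compat; [|nra].
      assert (0 < q * Sf g1 * t1 * t2 * (t2 - t1)) by (repeat apply Rmult_lt_0_compat; lra).
      nra. }
    destruct (Req_dec g1 g2) as [Heq|Hne]; [subst g2; lra|].
    assert (Hlt : h g1 < h g2).
    { apply (cross_inc h (fun g => / (1 + g) - a * (/ ((g + 1) ^ 3) / Sf g))); [lra|lra| | |lra].
      - intros z Hz. apply h_deriv. exact Hz.
      - intros z Hz H0. unfold h in H0.
        pose proof (ln_ub z ltac:(lra)).
        assert (ln (1 + z) <= z).
        { assert (z * (6 + z) / (6 + 4 * z) <= z); [|lra].
          apply (Rmult_le_reg_r (6 + 4 * z)); [lra|].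
          unfold Rdiv. rewrite Rmult_assoc, Rinv_l by lra. nra. }
        pose proof (Sf_pos z Hz) as HSz. pose proof (Sf_sq z Hz) as HSq.
        assert (Ha : 0 < a) by (unfold a; apply Rdiv_lt_0_compat; lra).
        assert (0 < c / (t2 * t2)) by (apply Rdiv_lt_0_compat; nra).
        assert (HaS : a * Sf z < z) by lra.
        assert (Hzz : (z + 1) ^ 2 * (Sf z * Sf z) = z * z + 2 * z).
        { rewrite HSq. field. lra. }
        assert (a < (z + 1) ^ 2 * Sf z).
        { apply (Rmult_lt_reg_r (Sf z)); [lra|]. nra. }
        assert (a * (/ ((z + 1) ^ 3) / Sf z) < / (1 + z)); [|lra].
        replace (a * (/ ((z + 1) ^ 3) / Sf z)) with ((a / ((z + 1) ^ 2 * Sf z)) * / (1 + z)) by (field; lra).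
        rewrite <- (Rmult_1_l (/ (1 + z))) at 2.
        apply Rmult_lt_compat_r; [apply Rinv_0_lt_compat; lra|].
        apply (Rmult_lt_reg_r ((z + 1) ^ 2 * Sf z)); [nra|].
        unfold Rdiv. rewrite Rmult_assoc, Rinv_l by nra. lra. }
    lra.
Qed.

Lemma drho_nonpos s g : 0 < g -> s <= 0 -> drho s g < 0.
Proof.
  intros Hg Hs. unfold drho.
  pose proof (ln_lb g ltac:(lra)) as Hlb.
  assert (Hw : 0 < sqrt (g + 2)) by (apply sqrt_lt_R0; lra).
  assert (H1 : g / (1 + g) < 2 * g / (2 + g)).
  { apply (Rmult_lt_reg_r ((1 + g) * (2 + g))); [nra|].
    replace (g / (1 + g) * ((1 + g) * (2 + g))) with (g * (2 + g)) by (field; lra).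
    replace (2 * g / (2 + g) * ((1 + g) * (2 + g))) with (2 * g * (1 + g)) by (field; lra).
    nra. }
  assert (0 < (ln (1 + g) - g / (1 + g)) / g ^ 2) by (apply Rdiv_lt_0_compat; nra).
  assert (s * (g + 3) / (2 * sqrt (g + 2) * (1 + g) ^ 2) <= 0).
  { unfold Rdiv. replace (s * (g + 3) * / (2 * sqrt (g + 2) * (1 + g) ^ 2))
      with (- ((- s) * (g + 3) * / (2 * sqrt (g + 2) * (1 + g) ^ 2))) by ring.
    assert (0 <= (- s) * (g + 3) * / (2 * sqrt (g + 2) * (1 + g) ^ 2)); [|lra].
    repeat apply Rmult_le_pos; try lra. apply Rlt_le, Rinv_0_lt_compat.
    repeat apply Rmult_lt_0_compat; try lra; nra. }
  unfold Rdiv in *. lra.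
Qed.

Lemma u_form m g : 0 < m -> 0 < g ->
  sqrt m * Sf g = sqrt (m * g) * (sqrt (g + 2) / (1 + g)) /\
  m * ln (1 + g) = (m * g) * (ln (1 + g) / g).
Proof.
  intros Hm Hg. split.
  - rewrite Sf_alt by lra. rewrite sqrt_mult by lra. ring.
  - field. lra.
Qed.

Lemma urho u q g : 0 < u -> 0 < g ->
  u * rho (q / sqrt u) g = u * (ln (1 + g) / g) - q * (sqrt u * (sqrt (g + 2) / (1 + g))).
Proof.
  intros Hu Hg. unfold rho.
  assert (Hr : 0 < sqrt u) by (apply sqrt_lt_R0; lra).
  assert (Hrr : sqrt u * sqrt u = u) by (apply sqrt_sqrt; lra).
  set (r := sqrt u) in *. clearbody r. subst u. field. lra.
Qed.

Lemma stepB N q m1 m2 g1 g2 : 0 < N -> 0 < m1 -> m1 < m2 -> 0 < g1 -> 0 < g2 -> g2 < g1 ->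
  (0 < q -> Acst * q ^ 2 <= N * ln 2) ->
  m1 * ln (1 + g1) - q * sqrt m1 * Sf g1 = N * ln 2 ->
  m2 * ln (1 + g2) - q * sqrt m2 * Sf g2 = N * ln 2 -> m2 * g2 < m1 * g1.
Proof.
  intros HN Hm1 H12 Hg1 Hg2 Hg21 Hcond E1 E2.
  assert (Hl2 : 0 < ln 2) by (rewrite <- ln_1; apply ln_increasing; lra).
  assert (Hc : 0 < N * ln 2) by nra.
  set (c := N * ln 2) in *. clearbody c.
  destruct (u_form m1 g1 ltac:(lra) Hg1) as [U1 V1].
  destruct (u_form m2 g2 ltac:(lra) Hg2) as [U2 V2].
  assert (E1' : (m1 * g1) * (ln (1 + g1) / g1) - q * (sqrt (m1 * g1) * (sqrt (g1 + 2) / (1 + g1))) = c)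
    by (rewrite <- U1, <- V1; rewrite <- E1; ring).
  assert (E2' : (m2 * g2) * (ln (1 + g2) / g2) - q * (sqrt (m2 * g2) * (sqrt (g2 + 2) / (1 + g2))) = c)
    by (rewrite <- U2, <- V2; rewrite <- E2; ring).
  assert (Hu1 : 0 < m1 * g1) by nra. assert (Hu2 : 0 < m2 * g2) by nra.
  set (u1 := m1 * g1) in *. set (u2 := m2 * g2) in *. clearbody u1 u2.
  destruct (Rlt_or_le u2 u1) as [H|H]; [exact H|exfalso].
  assert (Hr1 : 0 < sqrt u1) by (apply sqrt_lt_R0; lra).
  assert (Hr2 : sqrt u1 <= sqrt u2) by (apply sqrt_le_1_alt; lra).
  assert (Hrr1 : sqrt u1 * sqrt u1 = u1) by (apply sqrt_sqrt; lra).
  assert (Hrr2 : sqrt u2 * sqrt u2 = u2) by (apply sqrt_sqrt; lra).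
  set (s1 := q / sqrt u1).
  assert (HM2 : 0 < sqrt (g2 + 2) / (1 + g2)) by (apply Rdiv_lt_0_compat; [apply sqrt_lt_R0|]; lra).
  assert (HL2 : 0 < ln (1 + g2) / g2) by (apply Rdiv_lt_0_compat; [rewrite <- ln_1; apply ln_increasing|]; lra).
  assert (Rho1 : u1 * rho s1 g1 = c).
  { rewrite <- E1'. unfold s1. apply urho; lra. }
  assert (Rho12 : u1 * rho s1 g2 = u1 * (ln (1 + g2) / g2) - q * (sqrt u1 * (sqrt (g2 + 2) / (1 + g2)))).
  { unfold s1. apply urho; lra. }
  destruct (Rle_or_lt q 0) as [Hq|Hq].
  - assert (Hlt : rho s1 g2 - rho s1 g1 > rho s1 g1 - rho s1 g1).
    { apply (cross_dec (fun g => rho s1 g - rho s1 g1) (drho s1)); [lra|lra| | |lra].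
      - intros z Hz. replace (drho s1 z) with (drho s1 z - 0) by ring.
        apply derivable_pt_lim_minus; [apply rho_deriv; lra|apply derivable_pt_lim_const].
      - intros z Hz _. apply drho_nonpos; [lra|]. unfold s1. unfold Rdiv.
        assert (0 < / sqrt u1) by (apply Rinv_0_lt_compat; lra). nra. }
    assert (u1 * rho s1 g1 < u1 * rho s1 g2) by (apply Rmult_lt_compat_l; lra).
    assert (u1 * (ln (1 + g2) / g2) <= u2 * (ln (1 + g2) / g2)) by (apply Rmult_le_compat_r; lra).
    assert (- q * (sqrt u1 * (sqrt (g2 + 2) / (1 + g2))) <= - q * (sqrt u2 * (sqrt (g2 + 2) / (1 + g2)))).
    { apply Rmult_le_compat_l; [lra|]. apply Rmult_le_compat_r; lra. }
    lra.
  - assert (Hs1 : 0 < s1) by (unfold s1; apply Rdiv_lt_0_compat; lra).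
    assert (Hf1 : 0 <= rho s1 g1 - Acst * s1 ^ 2).
    { specialize (Hcond Hq).
      assert (Hs1sq : s1 ^ 2 = q ^ 2 / u1).
      { unfold s1. rewrite <- Hrr1 at 2. field. lra. }
      assert (rho s1 g1 = c / u1) by (rewrite <- Rho1; field; lra).
      rewrite H0, Hs1sq.
      replace (c / u1 - Acst * (q ^ 2 / u1)) with ((c - Acst * q ^ 2) / u1) by (field; lra).
      apply Rdiv_le_0_compat; lra. }
    assert (Hlt : rho s1 g1 - Acst * s1 ^ 2 < rho s1 g2 - Acst * s1 ^ 2).
    { apply (cross_dec (fun g => rho s1 g - Acst * s1 ^ 2) (drho s1)); [lra|lra| | |exact Hf1].
      - intros z Hz. replace (drho s1 z) with (drho s1 z - 0) by ring.
        apply derivable_pt_lim_minus; [apply rho_deriv; lra|apply derivable_pt_lim_const].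
      - intros z Hz Hfz. apply pointwise; lra. }
    assert (Hr2a : c / u1 < rho s1 g2).
    { assert (rho s1 g1 = c / u1) by (rewrite <- Rho1; field; lra). lra. }
    assert (Hb : u2 * (c / u1) < u2 * rho s1 g2) by (apply Rmult_lt_compat_l; lra).
    assert (Hb2 : c <= u2 * (c / u1)).
    { replace (u2 * (c / u1)) with (c * (u2 / u1)) by (field; lra).
      rewrite <- (Rmult_1_r c) at 1. apply Rmult_le_compat_l; [lra|].
      apply (Rmult_le_reg_r u1); [lra|]. unfold Rdiv. rewrite Rmult_assoc, Rinv_l by lra. lra. }
    assert (Hb3 : u2 * rho s1 g2 <= c).
    { rewrite <- E2'. unfold rho, s1.
      assert (sqrt u2 <= u2 / sqrt u1).
      { apply (Rmult_le_reg_r (sqrt u1)); [lra|]. unfold Rdiv. rewrite Rmult_assoc, Rinv_l by lra.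
        rewrite <- Hrr2 at 2. nra. }
      assert (q * (sqrt u2 * (sqrt (g2 + 2) / (1 + g2))) <= u2 * (q / sqrt u1 * sqrt (g2 + 2) / (1 + g2))).
      { replace (u2 * (q / sqrt u1 * sqrt (g2 + 2) / (1 + g2))) with (q * ((u2 / sqrt u1) * (sqrt (g2 + 2) / (1 + g2)))) by (field; lra).
        apply Rmult_le_compat_l; [lra|]. apply Rmult_le_compat_r; lra. }
      replace (u2 * (ln (1 + g2) / g2 - q / sqrt u1 * sqrt (g2 + 2) / (1 + g2)))
        with (u2 * (ln (1 + g2) / g2) - u2 * (q / sqrt u1 * sqrt (g2 + 2) / (1 + g2))) by ring.
      lra. }
    lra.
Qed.

Lemma cond_lemma N q : 0 < N -> q / sqrt N <= 2 * sqrt (ln 2) / (4 - sqrt 2) ->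
  0 < q -> Acst * q ^ 2 <= N * ln 2.
Proof.
  intros HN Hc Hq.
  assert (Hl2 : 0 < ln 2) by (rewrite <- ln_1; apply ln_increasing; lra).
  assert (Hr : 0 < sqrt N) by (apply sqrt_lt_R0; lra).
  assert (Hrr : sqrt N * sqrt N = N) by (apply sqrt_sqrt; lra).
  assert (H2 : sqrt 2 * sqrt 2 = 2) by (apply sqrt_sqrt; lra).
  assert (H2p : 0 < sqrt 2) by (apply sqrt_lt_R0; lra).
  assert (H2l : sqrt 2 < 2) by nra.
  assert (Hll : sqrt (ln 2) * sqrt (ln 2) = ln 2) by (apply sqrt_sqrt; lra).
  set (k := 2 * sqrt (ln 2) / (4 - sqrt 2)) in *.
  assert (Hq0 : 0 < q / sqrt N) by (apply Rdiv_lt_0_compat; lra).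
  assert (Hsq : (q / sqrt N) * (q / sqrt N) <= k * k) by nra.
  assert (Hk : k * k = 4 * ln 2 / ((4 - sqrt 2) ^ 2)).
  { unfold k. replace ((2 * sqrt (ln 2) / (4 - sqrt 2)) * (2 * sqrt (ln 2) / (4 - sqrt 2))) with (4 * (sqrt (ln 2) * sqrt (ln 2)) / ((4 - sqrt 2) ^ 2)) by (field; lra). rewrite Hll. reflexivity. }
  assert (HqN : (q / sqrt N) * (q / sqrt N) = q ^ 2 / N).
  { replace (q ^ 2 / N) with (q ^ 2 / (sqrt N * sqrt N)) by (rewrite Hrr; reflexivity). field. lra. }
  rewrite Hk, HqN in Hsq.
  unfold Acst.
  replace ((4 - sqrt 2) ^ 2 / 4 * q ^ 2) with ((4 - sqrt 2) ^ 2 / 4 * N * (q ^ 2 / N)) by (field; lra).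
  replace (N * ln 2) with ((4 - sqrt 2) ^ 2 / 4 * N * (4 * ln 2 / (4 - sqrt 2) ^ 2)) by (field; lra).
  apply Rmult_le_compat_l; [|exact Hsq].
  apply Rmult_le_pos; [|lra]. apply Rmult_le_pos; [nra|lra].
Qed.

Theorem lemma1 (N eps mhat q : R) (Gamma : R -> R)
  (HN : 0 < N) (Heps0 : 0 < eps) (Heps1 : eps < 1) (Hmhat : 0 < mhat)
  (Hq : Qfun q = eps)
  (HGamma : forall m, 0 < m -> 0 < Gamma m /\ Ffun N q m (Gamma m) = 0)
  (Hcond : q / sqrt N <= 2 * sqrt (ln 2) / (4 - sqrt 2)) :
  forall m1 m2, mhat <= m1 -> m1 < m2 -> m2 * Gamma m2 < m1 * Gamma m1.
Proof.
  intros m1 m2 H1 H12.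
  destruct (HGamma m1 ltac:(lra)) as [Hg1 F1].
  destruct (HGamma m2 ltac:(lra)) as [Hg2 F2].
  pose proof (eq_form N q m1 (Gamma m1) ltac:(lra) Hg1 F1) as E1.
  pose proof (eq_form N q m2 (Gamma m2) ltac:(lra) Hg2 F2) as E2.
  pose proof (stepA N q m1 m2 (Gamma m1) (Gamma m2) HN ltac:(lra) H12 Hg1 Hg2 E1 E2) as HA.
  apply (stepB N q m1 m2); try lra.
  apply cond_lemma; assumption.
Qed.
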